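(* Let $X$ be a compact metric space with metric $d$, let $\mathbb{G}$ be a locally compact Abelian group acting jointly continuously on $X$, and let $\mathrm{x}\in X$ be a transitive point (its $\mathbb{G}$-orbit is dense in $X$). For $\varepsilon>0$ let $P_\varepsilon=\{t\in\mathbb{G}: d(t.\mathrm{x},\mathrm{x})<\varepsilon\}$. Then the following are equivalent: (1) each $P_\varepsilon$ is relatively dense in $\mathbb{G}$, and for each $\varepsilon>0$ there is $\delta>0$ with $P_\delta-P_\delta\subseteq P_\varepsilon$; (2) $(X,\mathbb{G})$ is almost automorphic, with $\mathrm{x}$ an almost automorphic point.
   Context: A factor map $\pi:(X,\mathbb{G})\to(Y,\mathbb{G})$ is a continuous surjective map with $\pi(t.x)=t.\pi(x)$ for all $x,t$. The maximal equicontinuous factor $(X_{eq},\mathbb{G})$ of $(X,\mathbb{G})$ is the greatest factor whose $\mathbb{G}$-action is equicontinuous (unique up to conjugacy), with factor map $\pi:X\to X_{eq}$. The system $(X,\mathbb{G})$ is almost automorphic if $\pi$ is one-to-one over some point of $X_{eq}$; a point $x\in X$ is an almost automorphic point if $\pi^{-1}(\pi(x))=\{x\}$. *)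

(* Defs.v *)
From HB Require Import structures.
From mathcomp Require Import all_boot all_order all_algebra.
From mathcomp Require Import all_classical all_reals all_analysis.
Set Implicit Arguments. Unset Strict Implicit. Unset Printing Implicit Defensive.
Import Order.TTheory GRing.Theory Num.Theory.
Local Open Scope classical_set_scope.
Local Open Scope ring_scope.

Definition is_action (G : topologicalZmodType) (T : topologicalType)
  (act : G -> T -> T) : Prop :=
  (forall x, act 0 x = x) /\
  (forall s t x, act (s + t) x = act s (act t x)) /\
  continuous (fun p : G * T => act p.1 p.2).

Definition factor_map (G : topologicalZmodType) (T U : topologicalType)
  (actT : G -> T -> T) (actU : G -> U -> U) (pi : T -> U) : Prop :=
  continuous pi /\ (forall u, exists x, pi x = u) /\
  (forall t x, pi (actT t x) = actU t (pi x)).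

Definition equicontinuous_action (G : topologicalZmodType) (U : uniformType)
  (act : G -> U -> U) : Prop :=
  forall E, entourage E -> exists2 D, entourage D &
    forall y z, D (y, z) -> forall t, E (act t y, act t z).

Definition equicontinuous_factor (G : topologicalZmodType) (X : topologicalType)
  (actX : G -> X -> X) (Y : uniformType) (actY : G -> Y -> Y) (pi : X -> Y) : Prop :=
  compact [set: Y] /\ hausdorff_space Y /\ is_action actY /\
  equicontinuous_action actY /\ factor_map actX actY pi.

Definition maximal_equicontinuous_factor (G : topologicalZmodType)
  (X : topologicalType) (actX : G -> X -> X)
  (Y : uniformType) (actY : G -> Y -> Y) (pi : X -> Y) : Prop :=
  equicontinuous_factor actX actY pi /\
  forall (Z : uniformType) (actZ : G -> Z -> Z) (psi : X -> Z),
    equicontinuous_factor actX actZ psi ->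
    exists phi : Y -> Z, factor_map actY actZ phi /\ (forall x, psi x = phi (pi x)).

Definition relatively_dense (G : topologicalZmodType) (P : set G) : Prop :=
  exists K : set G, compact K /\
    forall t : G, exists p k, P p /\ K k /\ t = p + k.

Definition return_set (R : realType) (G : topologicalZmodType) (X : metricType R)
  (act : G -> X -> X) (x : X) (eps : R) : set G :=
  [set t | mdist (act t x) x < eps].

(* Main.v *)
Require Import Defs.
From HB Require Import structures.
From mathcomp Require Import all_boot all_order all_algebra.
From mathcomp Require Import all_classical all_reals all_analysis.
From mathcomp Require Import lra.
Import Order.TTheory GRing.Theory Num.Theory.
Local Open Scope classical_set_scope.
Local Open Scope ring_scope.
Set Implicit Arguments. Unset Strict Implicit. Unset Printing Implicit Defensive.

Lemma near_pairP (T U : topologicalType) (x : T) (y : U) (P : T * U -> Prop) :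
  (\forall p \near (x, y), P p) ->
  exists2 A, nbhs x A & exists2 B, nbhs y B & forall a b, A a -> B b -> P (a, b).
Proof.
case=> [[A B] /= [nA nB] sub]; exists A => //; exists B => // a b Aa Bb.
by apply: (sub (a, b)).
Qed.

Lemma near2_intro (T I : Type) (F : set_system T) (G : set_system I) (P : T -> I -> Prop) A B :
  F A -> G B -> (forall a b, A a -> B b -> P a b) ->
  \forall a \near F & b \near G, P a b.
Proof.
move=> FA GB H; exists (A, B) => //= -[a b] [/= Aa Bb]; exact: H.
Qed.

Lemma near2_elim (T I : Type) (F : set_system T) (G : set_system I) (P : T -> I -> Prop) :
  (\forall a \near F & b \near G, P a b) ->
  exists2 A, F A & exists2 B, G B & forall a b, A a -> B b -> P a b.
Proof.
case=> [[A B] /= [nA nB] sub]; exists A => //; exists B => // a b Aa Bb.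
by apply: (sub (a, b)).
Qed.

Record qbase (T : Type) := QBase {
  qB : set (set (T * T));
  qB0 : exists b, qB b;
  qBI : forall b1 b2, qB b1 -> qB b2 -> exists2 b, qB b & b `<=` b1 `&` b2;
  qBrefl : forall b, qB b -> forall x, b (x, x);
  qBinv : forall b, qB b -> exists2 b', qB b' & forall x y, b' (x, y) -> b (y, x);
  qBsplit : forall b, qB b -> exists2 b', qB b' &
    forall x y z w, b' (x, y) -> b' (y, z) -> b' (z, w) -> b (x, w) }.

Section QuotUnif.
Context {T : Type} (QB : qbase T).
Local Notation B := (qB QB).

Definition qrel (x y : T) := forall b, B b -> b (x, y).

Lemma qrel_refl x : qrel x x.
Proof. by move=> b Bb; exact: (qBrefl Bb). Qed.

Lemma qrel_sym x y : qrel x y -> qrel y x.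
Proof. by move=> h b Bb; have [b' Bb' H] := qBinv Bb; apply: H; exact: h. Qed.

Lemma qrel_trans x y z : qrel x y -> qrel y z -> qrel x z.
Proof.
move=> h1 h2 b Bb; have [b' Bb' H] := qBsplit Bb.
by apply: (H x y z z); [exact: h1|exact: h2|exact: (qBrefl Bb')].
Qed.

Record quot := MkQuot { qset : set T ; qsetP : exists x, qset = qrel x }.

HB.instance Definition _ := gen_eqMixin quot.
HB.instance Definition _ := gen_choiceMixin quot.

Definition qpi (x : T) : quot := @MkQuot (qrel x) (ex_intro _ x erefl).

Lemma quot_eq (a b : quot) : qset a = qset b -> a = b.
Proof.
case: a => A pA; case: b => B' pB /= eAB; subst B'.
by congr MkQuot; exact: Prop_irrelevance.
Qed.

Lemma qpiP x y : qpi x = qpi y <-> qrel x y.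
Proof.
split.
  by move=> /(congr1 qset) /= e; rewrite e; exact: qrel_refl.
move=> hxy; apply: quot_eq => /=; apply/funext => z; apply/propext; split.
  by move=> hxz; apply: qrel_trans (qrel_sym hxy) hxz.
by move=> hyz; apply: qrel_trans hxy hyz.
Qed.

Lemma qpi_surj (q : quot) : exists x, q = qpi x.
Proof. by case: q => A [x ex]; exists x; exact: quot_eq. Qed.

Definition Wq (b : set (T * T)) : set (quot * quot) :=
  [set ab | exists x y, ab.1 = qpi x /\ ab.2 = qpi y /\ b (x, y)].

Lemma Wq_qpi b x y : b (x, y) -> Wq b (qpi x, qpi y).
Proof. by move=> h; exists x, y. Qed.

Lemma Wq_sat b : B b -> exists2 b', B b' &
  forall x y, Wq b' (qpi x, qpi y) -> b (x, y).
Proof.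
move=> Bb; have [b' Bb' H] := qBsplit Bb; exists b' => // x y [x' [y' [/= ex [ey hb]]]].
move/qpiP : ex => ex; move/qpiP : ey => ey.
by apply: (H x x' y' y) => //; [exact: ex|exact: (qrel_sym ey)].
Qed.

Definition qent : set_system (quot * quot) := filter_from B Wq.

Lemma qent_filter : Filter qent.
Proof.
apply: filter_from_filter; first exact: qB0.
move=> b1 b2 B1 B2; have [b Bb sb] := qBI B1 B2; exists b => //.
by move=> [p q] [x [y [ex [ey hb]]]]; have [h1 h2] := sb _ hb; split; exists x, y.
Qed.

Lemma qent_diag A : qent A -> diagonal `<=` A.
Proof.
move=> [b Bb sA] [p q]; rewrite /diagonal /= => <-; apply: sA.
have [x ->] := qpi_surj p; exists x, x; split => //; split => //; exact: (qBrefl Bb).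
Qed.

Lemma qent_inv A : qent A -> qent A^-1%relation.
Proof.
move=> [b Bb sA]; have [b' Bb' H] := qBinv Bb; exists b' => // -[p q] [x [y [ex [ey hb]]]].
by apply: sA; exists y, x; split => //; split => //; exact: H.
Qed.

Lemma qent_split A : qent A -> exists2 C, qent C & (C \; C `<=` A)%relation.
Proof.
move=> [b Bb sA]; have [b' Bb' H] := qBsplit Bb; exists (Wq b'); first by exists b'.
move=> [p r] [q /= [x [y [ex [ey hxy]]]] [y' [z [ey' [ez hyz]]]]].
apply: sA; exists x, z; split => //; split => //.
rewrite /= in ex ey ey' ez; rewrite ey in ey'; move/qpiP: ey' => e.
by apply: (H x y y') => //; exact: e.
Qed.

HB.instance Definition _ := isUniform.Build quot qent_filter qent_diag qent_inv qent_split.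

Lemma quot_entE : @entourage quot = qent.
Proof. by []. Qed.

Lemma quot_hausdorff : hausdorff_space quot.
Proof.
move=> p q; rewrite -closeEnbhs entourage_close => h.
have [x ex] := qpi_surj p; have [y ey] := qpi_surj q; subst p q.
apply/qpiP => b Bb; have [b' Bb' H] := Wq_sat Bb; apply: H; apply: h.
by exists b'.
Qed.

End QuotUnif.
Section Basics.
Context (R : realType) (G : topologicalZmodType) (X : metricType R)
  (act : G -> X -> X) (x0 : X).
Hypothesis Hact : is_action act.
Hypothesis Hdense : closure (range (fun t => act t x0)) = [set: X].

Lemma act0 x : act 0 x = x. Proof. by case: Hact. Qed.
Lemma actD s t x : act (s + t) x = act s (act t x). Proof. by case: Hact => _ []. Qed.
Lemma act_cont : continuous (fun p : G * X => act p.1 p.2). Proof. by case: Hact => _ []. Qed.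
Lemma actNK t x : act (- t) (act t x) = x. Proof. by rewrite -actD addNr act0. Qed.
Lemma actKN t x : act t (act (- t) x) = x. Proof. by rewrite -actD subrr act0. Qed.

Lemma dist_sym (x y : X) : mdist x y = mdist y x. Proof. exact: metric_sym. Qed.
Lemma dist_tri (x y z : X) : mdist x z <= mdist x y + mdist y z. Proof. exact: metric_triangle. Qed.
Lemma dist0 (x : X) : mdist x x = 0. Proof. exact: mdistxx. Qed.

Lemma nbhs_dist (x : X) e : 0 < e -> nbhs x [set y | mdist x y < e].
Proof. by move=> e0; rewrite -ballEmdist; exact: nbhsx_ballx. Qed.

Lemma nbhs_distP (x : X) (A : set X) : nbhs x A -> exists2 e, 0 < e & forall y, mdist x y < e -> A y.
Proof.
move=> /metricType_numDomainType.nbhs_mdistP [e /= e0 H]; exists e => // y hy; exact: H.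
Qed.

Lemma dense_pt x e : 0 < e -> exists t, mdist (act t x0) x < e.
Proof.
move=> e0; have : closure (range (fun t => act t x0)) x by rewrite Hdense.
move=> /(_ _ (nbhs_dist x e0)) [_ [[t _ <-] /= h]]; exists t; by rewrite dist_sym.
Qed.

Lemma cont_at_dist (f : X -> X) x : {for x, continuous f} ->
  forall e, 0 < e -> exists2 d, 0 < d & forall y, mdist x y < d -> mdist (f x) (f y) < e.
Proof.
move=> cf e e0; have := cf _ (nbhs_dist (f x) e0); move/nbhs_distP => [d d0 H].
by exists d.
Qed.

Lemma act_cont_pt t : continuous (act t).
Proof.
move=> x; apply: (@continuous_comp _ _ _ (fun y => (t, y)) (fun p : G * X => act p.1 p.2)).
  by apply: cvg_pair; [exact: cvg_cst|exact: cvg_id].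
exact: act_cont.
Qed.

End Basics.
Section Dir12.
Context (R : realType) (G : topologicalZmodType) (X : metricType R)
  (act : G -> X -> X) (x0 : X).
Hypothesis Hact : is_action act.
Hypothesis Hdense : closure (range (fun t => act t x0)) = [set: X].
Hypothesis H1 : forall eps : R, 0 < eps -> relatively_dense (return_set act x0 eps).
Hypothesis H2 : forall eps : R, 0 < eps -> exists2 delta : R, 0 < delta &
      forall s t, return_set act x0 delta s -> return_set act x0 delta t ->
        return_set act x0 eps (s - t).

Local Notation Pr := (return_set act x0).

Lemma Pr0 e : 0 < e -> Pr e 0.
Proof. by move=> e0; rewrite /return_set /= act0 // dist0. Qed.

Lemma Pmono e1 e2 g : e1 <= e2 -> Pr e1 g -> Pr e2 g.
Proof. by rewrite /return_set /= => h1 h2; exact: lt_le_trans h2 h1. Qed.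

Lemma Pneg e : 0 < e -> exists2 d, 0 < d & forall g, Pr d g -> Pr e (- g).
Proof.
move=> e0; have [d d0 H] := H2 e0; exists d => // g hg.
by rewrite -sub0r; apply: H => //; exact: Pr0.
Qed.

Lemma Padd e : 0 < e -> exists2 d, 0 < d & forall a b, Pr d a -> Pr d b -> Pr e (a + b).
Proof.
move=> e0; have [d1 d10 H] := H2 e0; have [d2 d20 Hn] := Pneg d10.
exists (Num.min d1 d2); first by rewrite lt_min d10 d20.
move=> a b ha hb; rewrite -[b]opprK; apply: H.
  by apply: Pmono ha; rewrite ge_min lexx.
by apply: Hn; apply: Pmono hb; rewrite ge_min lexx orbT.
Qed.

Definition W (e : R) : set (X * X) :=
  [set xy | exists2 d, 0 < d & forall s t, mdist (act s x0) xy.1 < d ->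
     mdist (act t x0) xy.2 < d -> Pr e (s - t)].

Lemma Wmono e1 e2 xy : e1 <= e2 -> W e1 xy -> W e2 xy.
Proof.
move=> h [d d0 H]; exists d => // s t hs ht; exact: Pmono h (H s t hs ht).
Qed.

Lemma unifK (K : set G) : compact K -> forall x eta, 0 < eta ->
  exists2 d, 0 < d & forall k y, K k -> mdist x y < d ->
    mdist (act (- k) x) (act (- k) y) < eta.
Proof.
move=> cK x eta eta0.
have /compact_near_coveringP cov := cK.
have fc : continuous (fun p : G * X => act (- p.1) p.2).
  move=> p; apply: (@continuous_comp _ _ _ (fun q : G * X => (- q.1, q.2))
     (fun q : G * X => act q.1 q.2)); last exact: (act_cont Hact).
  apply: cvg_pair; last exact: cvg_snd.
  by apply: continuous_comp; [exact: cvg_fst|exact: opp_continuous].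
have Hk : forall k, K k -> \forall k' \near k & y \near nbhs x,
    mdist (act (- k') x) (act (- k') y) < eta.
  move=> k Kk.
  have e2 : 0 < eta / 2 by rewrite divr_gt0.
  have := fc (k, x) _ (nbhs_dist (act (- k) x) e2).
  move=> /near_pairP [A nA [B nB HAB]].
  apply: (@near2_intro _ _ _ _ _ A B nA nB) => k' y Ak' By /=.
  have h1 := HAB k' x Ak' (nbhs_singleton nB).
  have h2 := HAB k' y Ak' By.
  rewrite /= in h1 h2.
  apply: le_lt_trans (dist_tri _ (act (- k) x) _) _.
  by rewrite dist_sym; lra.
have Hn := cov X (nbhs x) (fun y k => mdist (act (- k) x) (act (- k) y) < eta) _ Hk.
have [d d0 Hd] := nbhs_distP (Hn _).
by exists d => // k y Kk hy; exact: (Hd y hy k Kk).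
Qed.

Lemma Wrefl e x : 0 < e -> W e (x, x).
Proof.
move=> e0; have [d1 d10 Hd1] := H2 e0.
have eta0 : 0 < d1 / 3 by rewrite divr_gt0.
have [K [cK dec]] := H1 eta0.
have [d d0 Hd] := unifK cK x eta0.
exists d => // s t /= hs ht.
have [p [k [Pp [Kk es]]]] := dec s; rewrite es in hs *.
have -> : p + k - t = (p + k - k) - (t - k) by rewrite addrK opprB addrA.
rewrite addrK; apply: Hd1.
  by apply: Pmono Pp; lra.
have E1 : act (t - k) x0 = act (- k) (act t x0) by rewrite addrC (actD Hact).
have E2 : act p x0 = act (- k) (act (p + k) x0).
  by rewrite addrC (actD Hact) (actNK Hact).
rewrite /return_set /= E1.
have h1 : mdist (act (- k) x) (act (- k) (act t x0)) < d1 / 3.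
  by apply: Hd => //; rewrite dist_sym.
have h2 : mdist (act (- k) x) (act (- k) (act (p + k) x0)) < d1 / 3.
  by apply: Hd => //; rewrite dist_sym.
have h3 : mdist (act p x0) x0 < d1 / 3 by exact: Pp.
rewrite E2 in h3.
apply: le_lt_trans (dist_tri _ (act (- k) x) _) _.
apply: le_lt_trans (lerD (lexx _) (dist_tri _ (act (- k) (act (p + k) x0)) _)) _.
rewrite dist_sym; lra.
Qed.


Lemma lt_minP (a b c : R) : a < Num.min b c -> a < b /\ a < c.
Proof. by rewrite lt_min => /andP. Qed.

Lemma le_minl (a b : R) : Num.min a b <= a. Proof. by rewrite ge_min lexx. Qed.
Lemma le_minr (a b : R) : Num.min a b <= b. Proof. by rewrite ge_min lexx orbT. Qed.
Lemma min_gt0 (a b : R) : 0 < a -> 0 < b -> 0 < Num.min a b.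
Proof. by move=> ha hb; rewrite lt_min ha hb. Qed.

Lemma Winv e : 0 < e -> exists2 e', 0 < e' & forall x y, W e' (x, y) -> W e (y, x).
Proof.
move=> e0; have [d d0 Hn] := Pneg e0; exists d => // x y [dl dl0 H].
exists dl => // s t /= hs ht; rewrite -opprB; apply: Hn; exact: H.
Qed.

Lemma Wsplit3 e : 0 < e -> exists2 e', 0 < e' & forall x y z w,
  W e' (x, y) -> W e' (y, z) -> W e' (z, w) -> W e (x, w).
Proof.
move=> e0; have [d1 d10 Ha] := Padd e0; have [d2 d20 Hb] := Padd d10.
exists (Num.min d1 d2); first exact: min_gt0.
move=> x y z w [a a0 Hxy] [b b0 Hyz] [c c0 Hzw].
exists (Num.min a c); first exact: min_gt0.
move=> s t /= /lt_minP [hs _] /lt_minP [_ ht].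
have [r1 hr1] := dense_pt Hdense y (min_gt0 a0 b0).
have [r2 hr2] := dense_pt Hdense z (min_gt0 b0 c0).
have [hr1a hr1b] := lt_minP hr1; have [hr2b hr2c] := lt_minP hr2.
have -> : s - t = (s - r1) + (r1 - r2) + (r2 - t) by rewrite !addrA !subrK.
have P1 := Hxy s r1 hs hr1a; have P2 := Hyz r1 r2 hr1b hr2b.
have P3 := Hzw r2 t hr2c ht.
apply: Ha; first apply: Hb.
- exact: Pmono (le_minr _ _) P1.
- exact: Pmono (le_minr _ _) P2.
- exact: Pmono (le_minl _ _) P3.
Qed.

Lemma Wcont e x : 0 < e -> exists2 eta, 0 < eta & forall y, mdist x y < eta -> W e (x, y).
Proof.
move=> e0; have [d d0 H] := Wrefl x e0.
have d20 : 0 < d / 2 by rewrite divr_gt0.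
exists (d / 2) => // y hy; exists (d / 2) => // s t /= hs ht.
apply: H => /=; first lra.
have := dist_tri (act t x0) y x; rewrite (dist_sym y x); lra.
Qed.

Lemma Wact e g x y : W e (x, y) -> W e (act g x, act g y).
Proof.
move=> [d d0 H].
have cg := act_cont_pt Hact (t := - g).
have [d1 d10 H1'] := cont_at_dist (cg (act g x)) d0.
have [d2 d20 H2'] := cont_at_dist (cg (act g y)) d0.
exists (Num.min d1 d2); first exact: min_gt0.
move=> s t /= /lt_minP [hs _] /lt_minP [_ ht].
have -> : s - t = (s - g) - (t - g) by rewrite opprB addrA subrK.
apply: H => /=.
  have h := H1' (act s x0) (ltac:(by rewrite dist_sym)).
  by rewrite (actNK Hact) -(actD Hact) addrC dist_sym in h.
have h := H2' (act t x0) (ltac:(by rewrite dist_sym)).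
by rewrite (actNK Hact) -(actD Hact) addrC dist_sym in h.
Qed.

Lemma Wpt e z : 0 < e -> W e (z, x0) -> mdist z x0 < e + e.
Proof.
move=> e0 [d d0 H].
have [r hr] := dense_pt Hdense z (min_gt0 d0 e0).
have [hrd hre] := lt_minP hr.
have := H r 0 hrd; rewrite (act0 Hact) dist0 subr0 => /(_ d0) hP.
have := dist_tri z (act r x0) x0; rewrite dist_sym in hre.
rewrite /return_set /= in hP; lra.
Qed.

End Dir12.
Section Dir12b.
Context (R : realType) (G : topologicalZmodType) (X : metricType R)
  (act : G -> X -> X) (x0 : X).
Hypothesis Hact : is_action act.
Hypothesis Hcpt : compact [set: X].
Hypothesis Hdense : closure (range (fun t => act t x0)) = [set: X].
Hypothesis H1 : forall eps : R, 0 < eps -> relatively_dense (return_set act x0 eps).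
Hypothesis H2 : forall eps : R, 0 < eps -> exists2 delta : R, 0 < delta &
      forall s t, return_set act x0 delta s -> return_set act x0 delta t ->
        return_set act x0 eps (s - t).

Local Notation W := (W act x0).

Definition Wset : set (set (X * X)) := [set b | exists2 e, 0 < e & b = W e].

Lemma Wset0 : exists b, Wset b.
Proof. by exists (W 1); exists 1. Qed.

Lemma WsetI b1 b2 : Wset b1 -> Wset b2 -> exists2 b, Wset b & b `<=` b1 `&` b2.
Proof.
move=> [e1 e10 ->] [e2 e20 ->]; exists (W (Num.min e1 e2)).
  by exists (Num.min e1 e2) => //; exact: min_gt0.
by move=> xy h; split; apply: Wmono h; [exact: le_minl|exact: le_minr].
Qed.

Lemma Wsetrefl b : Wset b -> forall x, b (x, x).
Proof. by move=> [e e0 ->] x; exact: Wrefl. Qed.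

Lemma Wsetinv b : Wset b -> exists2 b', Wset b' & forall x y, b' (x, y) -> b (y, x).
Proof.
move=> [e e0 ->]; have [e' e'0 H] := Winv Hact H2 e0.
by exists (W e') => //; exists e'.
Qed.

Lemma Wsetsplit b : Wset b -> exists2 b', Wset b' &
    forall x y z w, b' (x, y) -> b' (y, z) -> b' (z, w) -> b (x, w).
Proof.
move=> [e e0 ->]; have [e' e'0 H] := Wsplit3 Hact Hdense H2 e0.
by exists (W e') => //; exists e'.
Qed.

Definition QBW : qbase X := QBase Wset0 WsetI Wsetrefl Wsetinv Wsetsplit.

Definition Yq := quot QBW.
Definition piq : X -> Yq := qpi QBW.
Definition repq (q : Yq) : X := xget x0 (fun x => q = piq x).

Lemma repqP q : q = piq (repq q).
Proof. exact: (xgetPex x0 (qpi_surj q)). Qed.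

Lemma qrelW x y : qrel QBW x y -> forall e, 0 < e -> W e (x, y).
Proof. by move=> h e e0; apply: h; exists e. Qed.

Lemma Wqrel x y : (forall e, 0 < e -> W e (x, y)) -> qrel QBW x y.
Proof. by move=> h b [e e0 ->]; exact: h. Qed.

Lemma qrel_act g x y : qrel QBW x y -> qrel QBW (act g x) (act g y).
Proof. by move=> h; apply: Wqrel => e e0; apply: Wact => //; exact: qrelW. Qed.

Definition actY (g : G) (q : Yq) : Yq := piq (act g (repq q)).

Lemma actY_pi g x : actY g (piq x) = piq (act g x).
Proof.
rewrite /actY; apply/qpiP; apply: qrel_act; apply/qpiP.
exact: (esym (repqP (piq x))).
Qed.

Lemma ent_Yq (A : set (Yq * Yq)) : entourage A ->
  exists2 e, 0 < e & Wq (W e) `<=` A.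
Proof. by move=> [b [e e0 ->] sA]; exists e. Qed.

Lemma Yq_ent e : 0 < e -> entourage (Wq (W e) : set (Yq * Yq)).
Proof. by move=> e0; exists (W e) => //; exists e. Qed.

Lemma Wq_satW e : 0 < e -> exists2 e', 0 < e' &
  forall x y, Wq (W e') (piq x, piq y) -> W e (x, y).
Proof.
move=> e0; have [b' [e' e'0 ->] H] := @Wq_sat _ QBW (W e) (ex_intro2 _ _ e e0 erefl).
by exists e'.
Qed.

Lemma piq_cont : continuous piq.
Proof.
move=> x; apply/cvg_app_entourageP => A /ent_Yq [e e0 sA].
have [eta eta0 H] := Wcont Hact H1 H2 x e0.
apply: filterS (nbhs_dist x eta0) => y /= hy; apply: sA; apply: Wq_qpi.
exact: H.
Qed.

Lemma Yq_compact : compact [set: Yq].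
Proof.
have -> : [set: Yq] = piq @` [set: X].
  apply/seteqP; split => q // _; have [x ->] := qpi_surj q; by exists x.
apply: continuous_compact => //; exact: continuous_subspaceT piq_cont.
Qed.

Lemma Yq_is_action : is_action actY.
Proof.
split.
  by move=> q; have [x ->] := qpi_surj q; rewrite actY_pi (act0 Hact).
split.
  by move=> s t q; have [x ->] := qpi_surj q; rewrite (actY_pi t) !actY_pi (actD Hact).
move=> [g0 q0]; have [x ->] := qpi_surj q0.
apply/cvg_app_entourageP => A /ent_Yq [e e0 sA].
have [e1 e10 Hs] := Wsplit3 Hact Hdense H2 e0.
have [e2 e20 Hsat] := Wq_satW e10.
have [eta eta0 Hc] := Wcont Hact H1 H2 (act g0 x) e10.
have cg : {for g0, continuous (fun g => act g x)}.
  apply: (@continuous_comp _ _ _ (fun g : G => (g, x)) (fun p : G * X => act p.1 p.2)).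
    by apply: cvg_pair; [exact: cvg_id|exact: cvg_cst].
  exact: (act_cont Hact).
have nU := cg _ (nbhs_dist (act g0 x) eta0).
have nV : nbhs (piq x) (xsection (Wq (W e2)) (piq x)) by exact: nbhs_entourage (Yq_ent e20).
exists ((fun g => act g x) @^-1` [set y | mdist (act g0 x) y < eta], xsection (Wq (W e2)) (piq x)); first by split; [exact: nU|exact: nV].
move=> [g q] /= [Ug /xsectionP Vq]; have [y ey] := qpi_surj q; rewrite ey in Vq *.
rewrite !actY_pi; apply: sA; apply: Wq_qpi.
apply: (Hs _ (act g x) (act g y)).
- exact: Hc.
- by apply: Wact => //; exact: Hsat.
- exact: Wrefl.
Qed.

Lemma Yq_equicont : equicontinuous_action actY.
Proof.
move=> E /ent_Yq [e e0 sE]; have [e2 e20 Hsat] := Wq_satW e0.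
exists (Wq (W e2)); first exact: Yq_ent.
move=> p q; have [x ->] := qpi_surj p; have [y ->] := qpi_surj q => h t.
rewrite !actY_pi; apply: sE; apply: Wq_qpi; apply: Wact => //; exact: Hsat.
Qed.

Lemma Yq_factor : factor_map act actY piq.
Proof.
split; first exact: piq_cont.
split; first by move=> q; have [x ->] := qpi_surj q; exists x.
by move=> t x; rewrite actY_pi.
Qed.

Lemma Yq_eqfactor : equicontinuous_factor act actY piq.
Proof.
split; first exact: Yq_compact.
split; first exact: quot_hausdorff.
split; first exact: Yq_is_action.
split; first exact: Yq_equicont.
exact: Yq_factor.
Qed.

Lemma Yq_aa x : piq x = piq x0 -> x = x0.
Proof.
move/qpiP => h; apply: mdist_positivity.
have [m0|m0] := ltP 0 (mdist x x0); last first.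
  by apply/eqP; rewrite eq_le m0 mdist_ge0.
have e0 : 0 < mdist x x0 / 4 by rewrite divr_gt0.
have := Wpt Hact Hdense e0 (qrelW h e0); lra.
Qed.


Section Max.
Context (Z : uniformType) (actZ : G -> Z -> Z) (psi : X -> Z).
Hypothesis HZ : equicontinuous_factor act actZ psi.

Lemma maxM E : entourage E -> exists2 e, 0 < e & forall x y, W e (x, y) -> E (psi x, psi y).
Proof.
case: HZ => _ [_ [[aZ0 [aZD _]] [eqc [psic [_ psieq]]]]] entE.
have [D entD HD] := eqc E entE.
pose D1 := split_ent D `&` (split_ent D)^-1%relation.
have entD1 : entourage D1.
  by apply: filterI; [exact: entourage_split_ent|exact: entourage_inv (entourage_split_ent entD)].
have D1D p a b : D1 (p, a) -> D1 (p, b) -> D (a, b).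
  by move=> [_ h1] [h2 _]; exact: (entourage_split p entD h1 h2).
have := psic x0; move/cvg_app_entourageP => /(_ D1 entD1) /nbhs_distP [eta eta0 Heta].
have th0 : 0 < eta / 2 by rewrite divr_gt0.
have [e1 e10 Hs] := Wsplit3 Hact Hdense H2 th0.
have [e2 e20 Hi] := Winv Hact H2 e10.
exists (Num.min e1 e2); first exact: min_gt0.
move=> x y hxy.
have hxy1 : W e1 (x, y) by apply: Wmono hxy; exact: le_minl.
have hyx : W e1 (y, x) by apply: Hi; apply: Wmono hxy; exact: le_minr.
have [eta' eta'0 Hc] := Wcont Hact H1 H2 x e10.
have [s hs] := dense_pt Hdense x eta'0.
have hxs : W e1 (x, act s x0) by apply: Hc; rewrite dist_sym.
have Wx : W (eta / 2) (x, act s x0).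
  by apply: (Hs x x x) => //; exact: Wrefl.
have Wy : W (eta / 2) (y, act s x0).
  by apply: (Hs y x (act s x0)) => //; exact: Wrefl.
have Wx' := Wact Hact (- s) Wx; have Wy' := Wact Hact (- s) Wy.
rewrite (actNK Hact) in Wx' Wy'.
have dx := Wpt Hact Hdense th0 Wx'; have dy := Wpt Hact Hdense th0 Wy'.
have hx : D1 (psi x0, psi (act (- s) x)) by apply: Heta; rewrite dist_sym; lra.
have hy : D1 (psi x0, psi (act (- s) y)) by apply: Heta; rewrite dist_sym; lra.
rewrite !psieq in hx hy.
have := HD _ _ (D1D _ _ _ hx hy) s.
have K z : actZ s (actZ (- s) z) = z by rewrite -aZD subrr aZ0.
by rewrite !K.
Qed.

Definition phiZ (q : Yq) : Z := psi (repq q).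

Lemma psi_phi x : psi x = phiZ (piq x).
Proof.
case: HZ => _ [hZ _].
rewrite /phiZ; apply/esym; rewrite -(closeE hZ) entourage_close => A entA.
have [e e0 H] := maxM entA; apply: H.
have : qrel QBW (repq (piq x)) x by apply/qpiP; exact: (esym (repqP (piq x))).
by move=> h; exact: qrelW.
Qed.

Lemma phiZ_factor : factor_map actY actZ phiZ.
Proof.
case: HZ => _ [_ [_ [_ [_ [psisurj psieq]]]]].
split.
  move=> q; have [x ->] := qpi_surj q.
  apply/(@cvg_app_entourageP Z Yq phiZ (nbhs (piq x)) _ (phiZ (piq x))) => A entA.
  have [e e0 H] := maxM entA; have [e2 e20 Hsat] := Wq_satW e0.
  apply: filterS (nbhs_entourage (piq x) (Yq_ent e20)) => q' /xsectionP h.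
  have [y ey] := qpi_surj q'; rewrite ey in h *.
  rewrite -!psi_phi; apply: H; exact: Hsat.
split.
  by move=> z; have [x <-] := psisurj z; exists (piq x); rewrite -psi_phi.
move=> t q; have [x ->] := qpi_surj q.
by rewrite actY_pi -!psi_phi psieq.
Qed.

End Max.

Lemma Yq_max : maximal_equicontinuous_factor act actY piq.
Proof.
split; first exact: Yq_eqfactor.
move=> Z actZ psi HZ; exists (phiZ psi); split; first exact: (phiZ_factor HZ).
by move=> x; exact: (psi_phi HZ x).
Qed.

End Dir12b.
Section Dir21.
Context (R : realType) (G : topologicalZmodType) (X : metricType R)
  (act : G -> X -> X) (x0 : X).
Hypothesis Hact : is_action act.
Hypothesis Hcpt : compact [set: X].
Hypothesis Hdense : closure (range (fun t => act t x0)) = [set: X].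
Context (Y : uniformType) (actY : G -> Y -> Y) (pi : X -> Y).
Hypothesis HY : equicontinuous_factor act actY pi.
Hypothesis Haa : forall x, pi x = pi x0 -> x = x0.

Lemma pi_cont : continuous pi. Proof. by case: HY => _ [_ [_ [_ []]]]. Qed.
Lemma pi_eqv t x : pi (act t x) = actY t (pi x). Proof. by case: HY => _ [_ [_ [_ [_ []]]]]. Qed.
Lemma Y_haus : hausdorff_space Y. Proof. by case: HY => _ []. Qed.
Lemma Y_cpt : compact [set: Y]. Proof. by case: HY. Qed.
Lemma Y_equi : equicontinuous_action actY. Proof. by case: HY => _ [_ [_ []]]. Qed.

Lemma pi_cont_ent x A : entourage A -> \forall z \near x, A (pi x, pi z).
Proof. by move=> entA; have := @pi_cont x; move/cvg_app_entourageP; apply. Qed.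

Lemma stepA e : 0 < e -> exists2 E, entourage E &
  forall x, E (pi x0, pi x) -> mdist x x0 < e.
Proof.
move=> e0.
pose F := filter_from (@entourage Y) (fun A => [set E : set (Y * Y) | E `<=` A]).
have FF : Filter F.
  apply: filter_from_filter; first by exists setT; exact: entourageT.
  move=> A B entA entB; exists (A `&` B); first exact: filterI.
  by move=> E sE; split => z /sE [].
have /compact_near_coveringP cov := Hcpt.
have Hx : forall x, [set: X] x -> \forall x' \near x & E \near F,
    E (pi x0, pi x') -> mdist x' x0 < e.
  move=> x _; have [lt|ge] := ltP (mdist x x0) e.
    have r0 : 0 < e - mdist x x0 by rewrite subr_gt0.
    apply: (@near2_intro _ _ _ _ _ _ setT (nbhs_dist x r0)) => //.
      by exists setT => //; exact: entourageT.
    move=> x' E /= hx' _ _; have := dist_tri x' x x0; rewrite dist_sym in hx'.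
    lra.
  have nx : pi x <> pi x0.
    move=> /Haa ex; rewrite ex dist0 in ge; lra.
  have [A entA nA] : exists2 A, entourage A & ~ A (pi x0, pi x).
    apply: contrapT => h; apply: nx; apply/esym.
    rewrite -(closeE Y_haus) entourage_close => A entA.
    by apply: contrapT => nA; apply: h; exists A.
  have entA1 := entourage_split_ent entA.
  have FB : F [set E | E `<=` split_ent A] by exists (split_ent A).
  apply: (@near2_intro _ _ _ _ _ _ _ (@pi_cont_ent x _ (entourage_inv entA1)) FB).
  move=> x' E /= h1 h2 h3; exfalso; apply: nA.
  exact: (entourage_split (pi x') entA (h2 _ h3) h1).
have [A entA sA] := cov _ F _ FF Hx.
by exists A => // x; apply: (sA A) => //.
Qed.

Lemma D1_of (D : set (Y * Y)) : entourage D -> exists2 D1, entourage D1 &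
  forall p a b, D1 (p, a) -> D1 (p, b) -> D (a, b).
Proof.
move=> entD; exists (split_ent D `&` (split_ent D)^-1%relation).
  by apply: filterI; [exact: entourage_split_ent|exact: entourage_inv (entourage_split_ent entD)].
by move=> p a b [_ h1] [h2 _]; exact: (entourage_split p entD h1 h2).
Qed.

Lemma stepB e : 0 < e -> exists2 delta : R, 0 < delta &
      forall s t, return_set act x0 delta s -> return_set act x0 delta t ->
        return_set act x0 e (s - t).
Proof.
move=> e0; have [E entE HE] := stepA e0.
have [D entD HD] := Y_equi entE.
have [D1 entD1 D1D] := D1_of entD.
have [eta eta0 Heta] := nbhs_distP (@pi_cont_ent x0 _ entD1).
exists eta => // s t hs ht.
have h1 : D1 (pi x0, pi (act s x0)) by apply: Heta; rewrite dist_sym.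
have h2 : D1 (pi x0, pi (act t x0)) by apply: Heta; rewrite dist_sym.
have := HD _ _ (D1D _ _ _ h2 h1) (- t).
rewrite -!pi_eqv (actNK Hact) -(actD Hact) addrC => /HE.
by [].
Qed.

Lemma stepC e : 0 < e -> relatively_dense (return_set act x0 e).
Proof.
move=> e0; have [E entE HE] := stepA e0.
have [D entD HD] := Y_equi entE.
have entD2 := entourage_split_ent entD.
pose F := filter_from [set A : set G | finite_set A]
  (fun A => [set S : set G | A `<=` S /\ finite_set S]).
have FF : Filter F.
  apply: filter_from_filter; first by exists set0; exact: finite_set0.
  move=> A B fA fB; exists (A `|` B); first by rewrite /= finite_setU; split.
  by move=> S [sS fS]; split; split => //; apply: subset_trans sS;
    [exact: subsetUl|exact: subsetUr].
have /compact_near_coveringP cov := Y_cpt.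
have Hy : forall y, [set: Y] y -> \forall y' \near y & S \near F,
    exists2 k, S k & D (actY k (pi x0), y').
  move=> y _; have [x ->] : exists x, y = pi x.
    by case: HY => _ [_ [_ [_ [_ [hs _]]]]]; have [x <-] := hs y; exists x.
  have cx : closure (range (fun t => act t x0)) x by rewrite Hdense.
  have [_ [[k _ <-] /= hk]] := cx _ (@pi_cont_ent x _ (entourage_inv entD2)).
  rewrite /= in hk.
  have FB : F [set S | [set k] `<=` S /\ finite_set S] by exists [set k]; [exact: finite_set1|].
  apply: (@near2_intro _ _ _ _ _ _ _ (nbhs_entourage (pi x) entD2) FB).
  move=> y' S /xsectionP hy' [kS _]; exists k; first exact: kS.
  rewrite -pi_eqv; exact: (entourage_split (pi x) entD hk hy').
have [A0 fA0 sA0] := cov _ F _ FF Hy.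
have PA0 := sA0 A0 (conj (@subset_refl _ A0) fA0).
exists A0; split; first exact: finite_compact.
move=> g; have [k A0k hk] := PA0 (actY g (pi x0)) I.
exists (g - k), k; split; last by split => //; rewrite subrK.
have := HD _ _ hk (- k).
rewrite -!pi_eqv (actNK Hact) -(actD Hact) addrC => /HE.
by [].
Qed.

End Dir21.

Theorem theorem5p1 (R : realType) (G : topologicalZmodType) (X : metricType R)
  (act : G -> X -> X) (x0 : X) :
  hausdorff_space G -> locally_compact [set: G] ->
  compact [set: X] ->
  is_action act ->
  closure (range (fun t => act t x0)) = [set: X] ->
  ((forall eps : R, 0 < eps -> relatively_dense (return_set act x0 eps)) /\
   (forall eps : R, 0 < eps -> exists2 delta : R, 0 < delta &
      forall s t, return_set act x0 delta s -> return_set act x0 delta t ->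
        return_set act x0 eps (s - t)))
  <->
  (exists (Y : uniformType) (actY : G -> Y -> Y) (pi : X -> Y),
     maximal_equicontinuous_factor act actY pi /\
     (forall x, pi x = pi x0 -> x = x0)).
Proof.
move=> hG lcG Hcpt Hact Hdense; split.
  move=> [H1 H2].
  do 3 eexists; split; first exact: (Yq_max Hact Hcpt Hdense H1 H2).
  by move=> x; apply: Yq_aa.
move=> [Y [actY [pi [[HY _] Haa]]]].
split => e e0.
  exact: (stepC Hact Hcpt Hdense HY Haa e0).
exact: (stepB Hact Hcpt HY Haa e0).
Qed.
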